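(* Let $m>6C^2(C+1)$ and $l_m=\lfloor\frac{m-2}{C+1}\rfloor$. Let $F_m(\mathbf x)=\sum_{i=1}^n a_iP_m(x_i)$ be a node of the escalator tree of $m$-gonal forms with $n\ge (C-2)l_m+5$ and $a_1=a_2=\cdots=a_{(C-2)l_m+5}=1$. If $a_1+a_2+\cdots+a_n\ge m-4$, then $F_m(\mathbf x)$ is universal (hence a leaf).
   Context: For an integer $m\ge 3$ and $x\in\mathbb Z$ put $P_m(x)=\frac{m-2}{2}x^2-\frac{m-4}{2}x$. An $m$-gonal form of rank $n$ is $a_1P_m(x_1)+\cdots+a_nP_m(x_n)$ with positive integers $a_1\le\cdots\le a_n$ and $x_i\in\mathbb Z$; it represents $N$ if $N$ is a value at some integer vector, and is universal if it represents every positive integer. The truant of a non-universal form is the smallest positive integer it does not represent (the empty form has truant $1$). The escalator tree of $m$-gonal forms is the rooted tree whose root is the empty form; a universal node is a leaf, and a non-universal node $\sum_{i=1}^k a_iP_m(x_i)$ has as children exactly all forms $\sum_{i=1}^{k+1}a_iP_m(x_i)$ with $a_{k+1}\ge a_k$ (any $a_1\ge1$ if $k=0$) that represent the truant of the node. Standing assumption: $C$ is a fixed absolute constant such that for every $m\ge3$, every $m$-gonal form that represents every positive integer in $[1,C(m-2)]$ is universal. *)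

(* Defs.v *)
From mathcomp Require Import all_boot all_order all_algebra.
Set Implicit Arguments. Unset Strict Implicit. Unset Printing Implicit Defensive.
Import Order.TTheory GRing.Theory Num.Theory.
Open Scope ring_scope.

(* m-gonal number P_m(x) = ((m-2) x^2 - (m-4) x) / 2, for x in Z.
   The numerator is always even, so the integer division is exact. *)
Definition Pm (m : nat) (x : int) : int :=
  ((((m%:Z - 2) * x ^+ 2 - (m%:Z - 4) * x) %/ 2)%Z).

(* A form a_1 P_m(x_1) + ... + a_n P_m(x_n) is given by its coefficient
   list a = [:: a_1; ...; a_n]. *)
Definition represents (m : nat) (a : seq nat) (N : nat) : Prop :=
  exists x : seq int, size x = size a /\
    (\sum_(i < size a) (nth 0%N a i)%:Z * Pm m (nth 0 x i))%R = N%:Z.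

Definition universal (m : nat) (a : seq nat) : Prop :=
  forall N : nat, (0 < N)%N -> represents m a N.

Definition is_truant (m : nat) (a : seq nat) (t : nat) : Prop :=
  [/\ (0 < t)%N, ~ represents m a t &
      forall k : nat, (0 < k < t)%N -> represents m a k].

Inductive escalator_node (m : nat) : seq nat -> Prop :=
  | esc_root : escalator_node m [::]
  | esc_child : forall (a : seq nat) (b t : nat),
      escalator_node m a ->
      ~ universal m a ->
      is_truant m a t ->
      (0 < b)%N ->
      (last 1%N a <= b)%N ->
      represents m (rcons a b) t ->
      escalator_node m (rcons a b).

(* Main.v *)
Require Import Defs.
From mathcomp Require Import all_boot all_order all_algebra.
From mathcomp Require Import zify ring.
Import Order.TTheory GRing.Theory Num.Theory.
Open Scope ring_scope.

Lemma num_ge0 (m x : int) : 4 <= m -> 0 <= (m-2)*x^+2 - (m-4)*x.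
Proof. move=> h1. case: (lerP 1 x) => h.
 have: 0 <= (x - 1) * ((m-2) * x + 2) by apply: mulr_ge0; nia. nia. nia. Qed.

Lemma Pm_ge0 m x : (4 <= m)%N -> 0 <= Pm m x.
Proof. move=> hm; rewrite /Pm divz_ge0 //; apply: num_ge0; lia. Qed.

Lemma Pm_big m x : (4 <= m)%N -> x != 0 -> x != 1 -> m%:Z - 3 <= Pm m x.
Proof.
move=> hm h0 h1; rewrite /Pm lez_divRL //.
have [h|h] := lerP 2 x; first nia.
have : x <= -1 by lia.
move=> hx; nia.
Qed.

Lemma Pm_cases m x : (4 <= m)%N -> Pm m x = 0 \/ Pm m x = 1 \/ m%:Z - 3 <= Pm m x.
Proof.
move=> hm; case: (eqVneq x 0) => [->|h0]; first by left; rewrite /Pm; lia.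
case: (eqVneq x 1) => [->|h1]; last by right; right; apply: Pm_big.
right; left; rewrite /Pm.
have -> : ((m%:Z - 2) * 1 ^+ 2 - (m%:Z - 4) * 1) = 1 * 2 by ring.
by rewrite mulzK.
Qed.

Lemma Pm0 m : Pm m 0 = 0. Proof. by rewrite /Pm; lia. Qed.
Lemma Pm1 m : Pm m 1 = 1.
Proof. rewrite /Pm.
have -> : ((m%:Z - 2) * 1 ^+ 2 - (m%:Z - 4) * 1) = 1 * 2 by ring.
by rewrite mulzK. Qed.
Lemma Pmm1 m : Pm m (-1) = m%:Z - 3.
Proof. rewrite /Pm.
have -> : ((m%:Z - 2) * (-1) ^+ 2 - (m%:Z - 4) * (-1)) = (m%:Z - 3) * 2 by ring.
by rewrite mulzK. Qed.
Lemma Pm2 m : Pm m 2 = m%:Z.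
Proof. rewrite /Pm.
have -> : ((m%:Z - 2) * 2 ^+ 2 - (m%:Z - 4) * 2) = m%:Z * 2 by ring.
by rewrite mulzK. Qed.

Definition zsum m (a : seq nat) (x : seq int) : int :=
  \sum_(p <- zip a x) (p.1%:Z * Pm m p.2).

Lemma sum_zip m (a : seq nat) (x : seq int) : size x = size a ->
  \sum_(i < size a) (nth 0%N a i)%:Z * Pm m (nth 0 x i) = zsum m a x.
Proof.
rewrite /zsum; elim: a x => [|c a IH] [|z x] //=; first by rewrite big_ord0 big_nil.
case=> hs; rewrite big_ord_recl big_cons /=; congr (_ + _).
by rewrite -IH.
Qed.

Lemma rep_zip m a N : represents m a N <-> exists x, size x = size a /\ zsum m a x = N%:Z.
Proof.
split=> [[x [hs he]]|[x [hs he]]]; exists x; split=> //; by rewrite -?sum_zip // ?hs // sum_zip.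
Qed.

Lemma zsum_rcons m a x b z : size x = size a ->
  zsum m (rcons a b) (rcons x z) = zsum m a x + b%:Z * Pm m z.
Proof. by move=> hs; rewrite /zsum zip_rcons // big_rcons. Qed.

Lemma zsum_cat m a1 a2 x1 x2 : size x1 = size a1 ->
  zsum m (a1 ++ a2) (x1 ++ x2) = zsum m a1 x1 + zsum m a2 x2.
Proof. by move=> hs; rewrite /zsum zip_cat // big_cat. Qed.

Lemma zsum_ge0 m a x : (4 <= m)%N -> 0 <= zsum m a x.
Proof. move=> hm; rewrite /zsum; apply: sumr_ge0 => p _; apply: mulr_ge0 => //; exact: Pm_ge0. Qed.

(* a small value is only achieved with P in {0,1} *)
Lemma zsum_small m a x : (4 <= m)%N -> zsum m a x <= m%:Z - 4 -> zsum m a x <= (\sum_(c <- a) c)%N%:Z.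
Proof.
move=> hm; elim: a x => [|c a IH] [|z x] /=; rewrite /zsum /= ?big_nil ?big_cons //=.
rewrite PoszD => h.
  have h1 := zsum_ge0 m a x hm; rewrite /zsum in h1.
  have h2 : 0 <= c%:Z * Pm m z by apply: mulr_ge0 => //; exact: Pm_ge0.
  have := IH x; rewrite /zsum => IH'.
  move: h1 h h2 IH'; set S := \sum_(j <- zip a x) _ => h1 h h2 IH'.
  have IH2 : S <= (\sum_(c <- a) c)%N%:Z by apply: IH'; lia.
  suff : c%:Z * Pm m z <= c%:Z by lia.
  case: (Pm_cases m z hm) => [->|[->|hb]]; first lia; first lia.
  case: c h h2 {IH' IH2} => [|c] h h2; first lia.
  have : c.+1%:Z * (m%:Z - 3) <= c.+1%:Z * Pm m z by apply: ler_wpM2l.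
  nia.
Qed.

Lemma node_ps m a : escalator_node m a -> all (fun c => 0 < c)%N a /\ sorted leq a.
Proof.
elim=> [|a' b t _ [IHa IHs] _ _ bpos blast _]; first by [].
rewrite all_rcons bpos IHa; split=> //.
case: a' IHa IHs blast => [|c a'] //= _ IHs blast.
by rewrite rcons_path IHs.
Qed.

Lemma child_b m a b t : (4 <= m)%N -> is_truant m a t -> represents m (rcons a b) t ->
  (b <= t)%N.
Proof.
move=> hm [tpos tnot _] /rep_zip [x [hs he]].
rewrite size_rcons in hs.
case/lastP: x hs he => [|x z]; first by [].
rewrite size_rcons => -[hs]; rewrite zsum_rcons // => he.
have h1 := zsum_ge0 m a x hm.
case: (Pm_cases m z hm) => [h0|hz].
- exfalso; apply: tnot; apply/rep_zip; exists x; split=> //.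
  by rewrite -he h0 mulr0 addr0.
- have : 1 <= Pm m z by case: hz => [->|]; lia.
  move=> hz1.
  have : b%:Z * 1 <= b%:Z * Pm m z by apply: ler_wpM2l.
  lia.
Qed.

Lemma child_t m a t : (4 <= m)%N -> is_truant m a t ->
  ((\sum_(c <- a) c) + 1 <= m - 4)%N -> (t <= (\sum_(c <- a) c) + 1)%N.
Proof.
move=> hm [tpos tnot tall] hsm.
case: (leqP t ((\sum_(c <- a) c) + 1)) => // hlt.
have hk : (0 < (\sum_(c <- a) c) + 1 < t)%N by lia.
have := tall _ hk.
move=> /rep_zip [x [hs he]].
have := zsum_small m a x hm; rewrite he; lia.
Qed.

Definition bsum (a : seq nat) (y : seq bool) : nat :=
  \sum_(p <- zip a y) (p.1 * nat_of_bool p.2)%N.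

Lemma ones_sum (s : seq nat) : (forall i, (i < size s)%N -> nth 0%N s i = 1%N) ->
  (\sum_(c <- s) c)%N = size s.
Proof.
elim: s => [|c s IH] h; first by rewrite big_nil.
rewrite big_cons IH /=.
- by have := h 0%N isT => /= ->; rewrite add1n.
- by move=> i hi; have := h i.+1 hi.
Qed.

Lemma bsum_rcons a y b z : size y = size a ->
  bsum (rcons a b) (rcons y z) = (bsum a y + b * nat_of_bool z)%N.
Proof. by move=> hs; rewrite /bsum zip_rcons // big_rcons. Qed.

Lemma greedy m k a0 : (4 <= m)%N -> escalator_node m a0 -> (k <= size a0)%N ->
  (forall i, (i < k)%N -> nth 0%N a0 i = 1%N) ->
  forall r, (r <= \sum_(c <- a0) c)%N -> (r <= m - 4)%N ->
  exists y : seq bool, size y = (size a0 - k)%N /\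
    (bsum (drop k a0) y <= r)%N /\ (r - bsum (drop k a0) y <= k)%N.
Proof.
move=> hm hnode; elim: hnode k => [|a b t hn IH _ htr _ _ hrep] k hk hones r hr hrm.
- exists [::]; rewrite /bsum /= big_nil; split; first by []. rewrite big_nil in hr. lia.
- rewrite size_rcons in hk.
  case: (ltnP (size a) k) => hka.
  + have hk1 : k = (size a).+1 by lia.
    exists [::]; rewrite drop_oversize ?size_rcons ?hk1 // /bsum big_nil.
    split; first by rewrite subnn.
    have hs : (\sum_(c <- rcons a b) c)%N = (size a).+1.
      rewrite -(size_rcons a b); apply: ones_sum => i; rewrite size_rcons -hk1; apply: hones.
    lia.
  + have hones' : forall i, (i < k)%N -> nth 0%N a i = 1%N.
      move=> i hi; have := hones i hi; rewrite nth_rcons.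
      by have -> : (i < size a)%N by lia.
    rewrite big_rcons /= in hr.
    have hsy : forall y : seq bool, size y = (size a - k)%N -> size y = size (drop k a).
      by move=> y ->; rewrite size_drop.
    case: (leqP r (\sum_(c <- a) c)) => hra.
    * have [y [hy [h1 h2]]] := IH k hka hones' r hra hrm.
      exists (rcons y false); rewrite drop_rcons // bsum_rcons ?(hsy y hy) // !size_rcons hy.
      split; first lia. rewrite muln0 addn0. by split.
    * have hb : (b <= (\sum_(c <- a) c) + 1)%N.
        apply: (leq_trans (child_b _ _ _ _ hm htr hrep)); apply: (child_t _ _ _ hm htr); lia.
      have [y [hy [h1 h2]]] := IH k hka hones' (r - b)%N ltac:(lia) ltac:(lia).
      exists (rcons y true); rewrite drop_rcons // bsum_rcons ?(hsy y hy) // !size_rcons hy.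
      split; first lia. rewrite muln1. lia.
Qed.

Lemma ar_final (m q v R s r N k : nat) : (3 <= m)%N -> (v <= q)%N -> (3 * v <= R)%N ->
  R = (r - s)%N -> (s <= r)%N -> N = (q * (m - 3) + r)%N ->
  (m%:Z - 3) * (q - v)%N%:Z + (m%:Z * v%:Z + (1 * (R - 3 * v)%N%:Z + 0 * k%:Z)) + s%:Z = N%:Z.
Proof.
move=> hm hvq hvR hR hs hN; rewrite hN mul0r addr0 mul1r.
have [m' ->] : exists m', m = (3 + m')%N by exists (m - 3)%N; rewrite subnKC.
have [d hd] : exists d, q = (v + d)%N by exists (q - v)%N; rewrite subnKC.
have [e he] : exists e, R = (3 * v + e)%N by exists (R - 3 * v)%N; rewrite subnKC.
have [f hf] : exists f, r = (s + f)%N by exists (r - s)%N; rewrite subnKC.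
have hfe : f = (3 * v + e)%N by move: hR; rewrite he hf addKn.
rewrite hd he hf hfe !addKn !PoszD !PoszM; ring.
Qed.

Lemma zsum_ones m n x : size x = n -> zsum m (nseq n 1%N) x = \sum_(z <- x) Pm m z.
Proof.
rewrite /zsum; elim: x n => [|z x IH] [|n] //= hs; first by rewrite !big_nil.
rewrite !big_cons IH /= ?mul1r //; by case: hs.
Qed.

Lemma zsum_bool m b y : size y = size b ->
  zsum m b (map (fun c : bool => (nat_of_bool c)%:Z) y) = (bsum b y)%:Z.
Proof.
rewrite /zsum /bsum; elim: b y => [|c b IH] [|z y] //= hs; first by rewrite !big_nil.
rewrite !big_cons /= PoszD IH; last by case: hs. congr (_ + _).
by case: z => /=; rewrite ?Pm1 ?Pm0 ?muln1 ?muln0 ?mulr1 ?mulr0.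
Qed.

Lemma sum_nseq m n c : \sum_(z <- nseq n c) Pm m z = Pm m c * n%:Z.
Proof.
elim: n => [|n IH] /=; first by rewrite big_nil mulr0.
by rewrite big_cons IH -addn1 PoszD mulrDr mulr1 addrC.
Qed.

Theorem lemma4p15 (C : nat)
  (HC : forall (m : nat) (a : seq nat), (3 <= m)%N ->
          all (fun c => 0 < c)%N a -> sorted leq a ->
          (forall N : nat, (1 <= N <= C * (m - 2))%N -> represents m a N) ->
          universal m a)
  (m : nat) (Hm : (6 * C ^ 2 * (C + 1) < m)%N)
  (a : seq nat) (Hnode : escalator_node m a)
  (Hn : ((C - 2) * ((m - 2) %/ (C + 1)) + 5 <= size a)%N)
  (Hones : forall i : nat, (i < (C - 2) * ((m - 2) %/ (C + 1)) + 5)%N ->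
           nth 0%N a i = 1%N)
  (Hsum : (m - 4 <= \sum_(c <- a) c)%N) :
  universal m a.
Proof.
case: C HC Hm Hn Hones => [|C'] HC Hm Hn Hones.
  exfalso.
  have hu := HC 3%N [::] isT isT isT (fun N hN => ltac:(exfalso; lia)).
  have := hu 1%N isT => /rep_zip [x [_ hx]].
  by move: hx; rewrite /zsum; case: x => [|? ?]; rewrite /= big_nil.
set C := C'.+1 in HC Hm Hn Hones *.
set l := ((m - 2) %/ (C + 1))%N in Hn Hones.
set k0 := ((C - 2) * l + 5)%N in Hn Hones.
have hC : (1 <= C)%N by [].
have hC2 : (C ^ 2 = C * C)%N by rewrite expnS expn1.
rewrite hC2 in Hm.
have hCC : (C * (C + 1) <= 6 * (C * C) * (C + 1))%N.
  rewrite mulnA; apply: leq_mul => //; nia.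
have hm13 : (13 <= m)%N.
  have : (1 * 2 <= C * (C + 1))%N by apply: leq_mul; lia.
  lia.
have hl : (C <= l)%N.
  rewrite /l leq_divRL ?addn1 //.
  have -> : C.+1 = (C + 1)%N by rewrite addn1.
  lia.
have hk0 : (C + 2 <= k0)%N.
  have h5 : (5 <= k0)%N by rewrite /k0 leq_addl.
  case: (leqP C 3) => hc; first lia.
  have : (1 * l <= (C - 2) * l)%N by apply: leq_mul; lia.
  rewrite /k0; lia.
have [hpos hsort] := node_ps m a Hnode.
apply: HC => //; first lia.
move=> N /andP [hN1 hN2].
set q := (N %/ (m - 3))%N.
set r := (N %% (m - 3))%N.
have hNqr : N = (q * (m - 3) + r)%N by rewrite /q /r -divn_eq.
have hr : (r < m - 3)%N by rewrite /r ltn_pmod //; lia.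
have hq : (q <= C)%N.
  case: (leqP q C) => // hq.
  have : ((C + 1) * (m - 3) <= q * (m - 3))%N by apply: leq_mul; lia.
  nia.
have [y [hy [h1 h2]]] := greedy m k0 a ltac:(lia) Hnode Hn Hones r ltac:(lia) ltac:(lia).
set s := bsum (drop k0 a) y in h1 h2.
set R := (r - s)%N in h2.
set v := minn q (R %/ 3).
have hv1 : (v <= q)%N by rewrite /v geq_minl.
have hv2 : (v <= R %/ 3)%N by rewrite /v geq_minr.
have hR3 : (3 * (R %/ 3) <= R)%N by rewrite mulnC leq_divM.
have hR3' : (R < 3 * (R %/ 3) + 3)%N.
  have := ltn_pmod R (isT : (0 < 3)%N); have := divn_eq R 3; lia.
have hvc : v = q \/ v = (R %/ 3)%N.
  by rewrite /v /minn; case: ifP; [left|right].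
have hsdef : bsum (drop k0 a) y = s by [].
have hRdef : R = (r - s)%N by [].
clearbody v R s.
have hv3 : (3 * v <= R)%N by apply: leq_trans hR3; rewrite leq_mul2l.
have hcnt : (q + R - 3 * v <= k0)%N.
  move: hvc hR3' hk0 hq h2 hv3; clear; case=> ->; lia.
pose xs1 : seq int := nseq (q - v)%N (-1) ++ nseq v 2 ++ nseq (R - 3 * v)%N 1 ++ nseq (k0 - (q + R - 3 * v))%N 0.
have hxs1 : size xs1 = k0.
  rewrite /xs1 !size_cat !size_nseq; move: hv1 hv3 hcnt; clear; lia.
have ha : a = nseq k0 1%N ++ drop k0 a.
  rewrite -{1}(cat_take_drop k0 a); congr (_ ++ _).
  apply: (@eq_from_nth _ 0%N); first by rewrite size_takel // size_nseq.
  move=> i; rewrite size_takel // => hi; by rewrite nth_take // nth_nseq hi Hones.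
apply (proj2 (rep_zip m a N)); exists (xs1 ++ map (fun c : bool => (nat_of_bool c)%:Z) y); split.
  by rewrite size_cat hxs1 size_map hy; lia.
rewrite ha zsum_cat ?size_nseq // zsum_ones // zsum_bool; last by rewrite size_drop.
rewrite hsdef /xs1 !big_cat /= !sum_nseq Pmm1 Pm2 Pm1 Pm0.
apply: (ar_final _ _ _ _ _ _ _ _ _ hv1 hv3 hRdef h1 hNqr); lia.
Qed.
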